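(* Let $S$ be an uncovered set of patterns and let $f_n$ denote the number of rooted labeled forests on $[n]$ avoiding $S$. Then $L_S=\lim_{n\to\infty}\frac{f_n^{1/n}}{n}$ equals $e^{-1}$ if and only if $S$ contains $12$ or $21$.
   Context: A rooted labeled forest on $[n]$ is an unordered forest on $n$ vertices, each component with a distinguished root, with distinct labels from $[n]$. A pattern of length $k$ is a permutation of $[k]$; an instance of it is a sequence of vertices $v_1,\dots,v_k$ with $v_i$ a strict ancestor of $v_{i+1}$ whose labels are in the same relative order as the pattern; a forest avoids $S$ if it contains no instance of any pattern in $S$. A set $S$ of patterns is covered if it contains a pattern $\pi$ of length $k$ with $\pi(1)=1$ and a pattern $\sigma$ of length $\ell$ with $\sigma(1)=\ell$; otherwise $S$ is uncovered. *)

(* Defs.v *)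
From HB Require Import structures.
From mathcomp Require Import all_boot all_order all_fingroup all_algebra.
From mathcomp Require Import all_classical all_reals all_analysis.
Set Implicit Arguments. Unset Strict Implicit. Unset Printing Implicit Defensive.

(* A rooted labeled forest on [n] is encoded by its parent function on the
   vertex set 'I_n (vertex i carries label i+1): par v = None iff v is a root,
   par v = Some u iff u is the parent of v. *)
Definition parfun (n : nat) := {ffun 'I_n -> option 'I_n}.

Definition strict_anc n (par : parfun n) (u v : 'I_n) : Prop :=
  exists m : nat, iter m.+1 (fun o => obind par o) (Some v) = Some u.

Definition is_forest n (par : parfun n) : Prop :=
  forall v : 'I_n, ~ strict_anc par v v.

(* A pattern of length k+1 (k+1 >= 1) is a permutation in 'S_(k+1);
   pi i (i : 'I_k.+1) is its (i+1)-th entry (0-based values). *)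
Definition contains n (par : parfun n) k (pi : 'S_k.+1) : Prop :=
  exists w : 'I_k.+1 -> 'I_n,
    (forall i j : 'I_k.+1, nat_of_ord j = (nat_of_ord i).+1 ->
        strict_anc par (w i) (w j)) /\
    (forall i j : 'I_k.+1, (w i < w j)%N = (pi i < pi j)%N).

Definition patset := forall k : nat, pred 'S_k.+1.

Definition avoids n (par : parfun n) (S : patset) : Prop :=
  forall k (pi : 'S_k.+1), S k pi -> ~ contains par pi.

Definition covered (S : patset) : Prop :=
  (exists k (pi : 'S_k.+1), S k pi /\ pi ord0 = ord0) /\
  (exists l (sg : 'S_l.+1), S l sg /\ sg ord0 = ord_max).

Definition uncovered (S : patset) : Prop := ~ covered S.

Definition num_avoiding (S : patset) (n : nat) : nat :=
  #|[set par : parfun n | `[< is_forest par /\ avoids par S >] ]|.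

Definition pat12 : 'S_2 := 1%g.
Definition pat21 : 'S_2 := tperm (ord0 : 'I_2) ord_max.

(* Main.v *)
Require Import Defs.
From HB Require Import structures.
From mathcomp Require Import all_boot all_order all_fingroup all_algebra.
From mathcomp Require Import all_classical all_reals all_analysis.
From mathcomp Require Import zify ring lra.
Import Order.TTheory GRing.Theory Num.Theory numFieldNormedType.Exports.
Set Implicit Arguments. Unset Strict Implicit. Unset Printing Implicit Defensive.


Section Anc.
Variable n : nat.
Implicit Types (par : parfun n) (u v w : 'I_n).

Definition stp par := fun o : option 'I_n => obind par o.

Lemma iter_None par m : iter m (stp par) None = None.
Proof. by elim: m => //= m ->. Qed.

Lemma anc_par par u v : par v = Some u -> strict_anc par u v.
Proof. by move=> h; exists 0%N. Qed.

Lemma anc_unfold par u v : strict_anc par u v <->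
  (par v = Some u \/ exists y, par v = Some y /\ strict_anc par u y).
Proof.
split.
  case=> m; rewrite iterSr /=; case: m => [|m] /=; first by left.
  case E: (par v) => [y|]; last by rewrite iter_None.
  by move=> h; right; exists y; split=> //; exists m.
case=> [h|[y [h [m hm]]]]; first by exists 0%N.
by exists m.+1; rewrite iterSr /= h.
Qed.

Lemma anc_trans par u v w : strict_anc par u v -> strict_anc par v w -> strict_anc par u w.
Proof.
case=> a ha [b hb]; exists (a + b.+1)%N.
by rewrite -addSn iterD hb.
Qed.

Lemma anc_rel par (R : 'I_n -> 'I_n -> Prop) :
  (forall v u, par v = Some u -> R v u) -> (forall a b c, R a b -> R b c -> R a c) ->
  forall u v, strict_anc par u v -> R v u.
Proof.
move=> h1 h2 u v [m]; elim: m v => [|m IH] v.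
  by move=> /= h; apply: h1.
rewrite iterSr /=; case E: (par v) => [y|]; last by rewrite iter_None.
move=> /IH hy; exact: h2 (h1 _ _ E) hy.
Qed.

Lemma chain_anc par k (w : 'I_k.+1 -> 'I_n) :
  (forall i j : 'I_k.+1, nat_of_ord j = (nat_of_ord i).+1 -> strict_anc par (w i) (w j)) ->
  forall i : 'I_k.+1, (0 < i)%N -> strict_anc par (w ord0) (w i).
Proof.
move=> hc i; case: i => i /= ip; case: i ip => // i.
elim: i => [|i IH] ip _.
  by apply: hc => /=.
have ip' : (i.+1 < k.+1)%N by apply: ltn_trans ip.
apply: anc_trans (IH ip' isT) _.
by apply: (hc (Ordinal ip') (Ordinal ip)).
Qed.

End Anc.


Section Dec.
Variable n : nat.
Implicit Types (par : parfun n) (u v w : 'I_n).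

Definition dopt v : pred (option 'I_n) := fun o => if o is Some u then (v < u)%N else true.
Definition decr par := [forall v, dopt v (par v)].

Lemma decrP par : decr par -> forall v u, par v = Some u -> (v < u)%N.
Proof. by move=> /forallP h v u e; have := h v; rewrite e. Qed.

Lemma decr_anc par u v : decr par -> strict_anc par u v -> (v < u)%N.
Proof.
move=> hd; apply: (anc_rel (R := fun a b => (a < b)%N)); first exact: decrP.
by move=> a b c; apply: ltn_trans.
Qed.

Lemma decr_forest par : decr par -> is_forest par.
Proof. by move=> hd v /(decr_anc hd); rewrite ltnn. Qed.

End Dec.

Lemma start_max n k (pi : 'S_k.+1) (w : 'I_k.+1 -> 'I_n) :
  (forall i, i != ord0 -> (w i < w ord0)%N) ->
  (forall i j, (w i < w j)%N = (pi i < pi j)%N) -> pi ord0 = ord_max.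
Proof.
move=> h1 h2; set j := (pi^-1 ord_max)%g.
have pj : pi j = ord_max by rewrite /j permKV.
case: (eqVneq j ord0) => [e|ne]; first by rewrite -e.
have := h1 _ ne; rewrite h2 pj => lt.
by have := leq_ord (pi ord0); rewrite leqNgt lt.
Qed.

Definition nomax (S : patset) := forall k (pi : 'S_k.+1), S k pi -> pi ord0 != ord_max.

Lemma decr_avoids n (par : parfun n) S : decr par -> nomax S -> avoids par S.
Proof.
move=> hd hS k pi Spi [w [hc ho]].
have := hS _ _ Spi; rewrite (start_max (w := w)) ?eqxx //.
move=> i ne; apply: (decr_anc hd); apply: (chain_anc hc).
by rewrite lt0n; apply: contra ne => /eqP e; apply/eqP/val_inj.
Qed.

Lemma avoid12 n (par : parfun n) : is_forest par -> ~ contains par pat12 -> decr par.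
Proof.
move=> hf hc; apply/forallP => v; rewrite /dopt.
case E: (par v) => [u|] //; rewrite ltnNge; apply/negP => le.
have ne : u != v by apply/eqP => e; apply: (hf v); apply: anc_par; rewrite E e.
have lt : (u < v)%N by rewrite ltn_neqAle le andbT; apply: contra ne => /eqP e; apply/eqP/val_inj.
apply: hc; exists (fun i : 'I_2 => if nat_of_ord i == 0%N then u else v); split.
  move=> [[|[|i]] hi] [[|[|j]] hj] //= _; exact: anc_par.
move=> [[|[|i]] hi] [[|[|j]] hj] //=; rewrite /pat12 !perm1 /= ?ltnn ?lt //.
by rewrite ltnNge le.
Qed.

Section Count.

Lemma card_gt (n v : nat) : #|[pred u : 'I_n | (v < u)%N]| = (n - v.+1)%N.
Proof.
rewrite -sum1_card big_mkcond /=.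
rewrite -(big_mkord xpredT (fun i => if (v < i)%N then 1%N else 0%N)).
elim: n => [|n IH]; first by rewrite big_geq.
rewrite big_nat_recr //= IH; case: ltnP => h; lia.
Qed.

Lemma card_opt (T : finType) (A : pred (option T)) :
  #|A| = ((None \in A) + #|[pred x | Some x \in A]|)%N.
Proof.
rewrite (cardD1 None); congr (_ + _)%N.
have inj : injective (@Some T) by move=> ? ? [].
rewrite -(fintype.card_image inj); apply: eq_card => o.
rewrite !inE; case: o => [x|] /=.
  by rewrite fintype.mem_image.
by apply/esym/fintype.imageP => -[x].
Qed.

Lemma card_dopt n (v : 'I_n) : #|dopt v| = (n - v)%N.
Proof.
rewrite card_opt; rewrite (eq_card (B := [pred u : 'I_n | (v < u)%N])) ?card_gt.
  by rewrite unfold_in /=; have := ltn_ord v; lia.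
by move=> u; rewrite !unfold_in.
Qed.



Lemma card_fam n (F : 'I_n -> pred (option 'I_n)) :
  #|[set par : parfun n | [forall v, F v (par v)]]| = (\prod_(v < n) #|F v|)%N.
Proof.
have -> : #|[set par : parfun n | [forall v, F v (par v)]]| = #|family F|.
  apply: eq_card => par; rewrite inE; apply/forallP/familyP => h x; exact: h.
by rewrite card_family foldrE big_map big_enum.
Qed.

Lemma prod_nv n : (\prod_(v < n) (n - v))%N = n`!.
Proof.
elim: n => [|n IH]; first by rewrite big_ord0.
by rewrite big_ord_recl /= subn0 factS -IH.
Qed.

Lemma card_decr n : #|[set par : parfun n | decr par]| = n`!.
Proof.
rewrite card_fam -prod_nv; apply: eq_bigr => v _; exact: card_dopt.
Qed.

End Count.

Lemma nomax12 S : uncovered S -> S 1%N pat12 -> nomax S.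
Proof.
move=> hu h12 k pi Spi; apply/negP => /eqP e; apply: hu; split.
  by exists 1%N, pat12; split=> //; rewrite /pat12 perm1.
by exists k, pi.
Qed.

Lemma case12 S n : uncovered S -> S 1%N pat12 -> num_avoiding S n = n`!.
Proof.
move=> hu h12; rewrite /num_avoiding -card_decr; apply: eq_card => par; rewrite !inE; apply/asboolP/idP.
  by case=> hf ha; apply: avoid12 hf (ha _ _ h12).
move=> hd; split; first exact: decr_forest.
exact: decr_avoids hd (nomax12 hu h12).
Qed.



Definition flipp n (par : parfun n) : parfun n :=
  [ffun v => omap (@rev_ord n) (par (rev_ord v))].

Lemma flippK n : involutive (@flipp n).
Proof.
move=> par; apply/ffunP => v; rewrite !ffunE rev_ordK.
by case: (par v) => //= u; rewrite rev_ordK.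
Qed.

Lemma iter_flip n (par : parfun n) m o :
  iter m (stp (flipp par)) (omap (@rev_ord n) o) = omap (@rev_ord n) (iter m (stp par) o).
Proof.
elim: m => [|m IH] //=; rewrite IH; case: (iter m _ o) => //= x.
by rewrite /stp /= ffunE rev_ordK.
Qed.

Lemma flip_anc n (par : parfun n) u v :
  strict_anc par u v -> strict_anc (flipp par) (rev_ord u) (rev_ord v).
Proof.
by case=> m hm; exists m; rewrite -[Some (rev_ord v)]/(omap (@rev_ord n) (Some v)) iter_flip hm.
Qed.

Lemma flip_forest n (par : parfun n) : is_forest par -> is_forest (flipp par).
Proof.
by move=> hf v /flip_anc; rewrite flippK; apply: hf.
Qed.

Lemma rev_lt n (a b : 'I_n) : (rev_ord a < rev_ord b)%N = (b < a)%N.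
Proof. rewrite /=; have := ltn_ord a; have := ltn_ord b; lia. Qed.

Definition cpl k (pi : 'S_k.+1) : 'S_k.+1 := (pi * perm (@rev_ord_inj k.+1))%g.

Lemma cplE k (pi : 'S_k.+1) i : cpl pi i = rev_ord (pi i).
Proof. by rewrite /cpl permM permE. Qed.

Lemma cplK k : involutive (@cpl k).
Proof. by move=> pi; apply/permP => i; rewrite !cplE rev_ordK. Qed.

Lemma flip_contains n (par : parfun n) k (pi : 'S_k.+1) :
  contains par pi -> contains (flipp par) (cpl pi).
Proof.
case=> w [hc ho]; exists (fun i => rev_ord (w i)); split.
  by move=> i j e; apply: flip_anc; apply: hc.
by move=> i j; rewrite !cplE !rev_lt ho.
Qed.

Definition flipS (S : patset) : patset := fun k pi => S k (cpl pi).

Lemma flip_avoids n (par : parfun n) S : avoids par (flipS S) -> avoids (flipp par) S.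
Proof.
move=> ha k pi Spi /flip_contains; rewrite flippK; apply: ha.
by rewrite /flipS cplK.
Qed.

Lemma flip_avoids2 n (par : parfun n) S : avoids par S -> avoids (flipp par) (flipS S).
Proof.
move=> ha k pi Spi /flip_contains; rewrite flippK; exact: ha.
Qed.

Lemma num_flip S n : num_avoiding (flipS S) n = num_avoiding S n.
Proof.
rewrite /num_avoiding -(card_imset _ (can_inj (@flippK n))).
apply: eq_card => par; rewrite inE.
apply/finset.imsetP/asboolP.
  case=> q; rewrite inE => /asboolP [hf ha] ->.
  by split; [apply: flip_forest|apply: flip_avoids].
case=> hf ha; exists (flipp par); last by rewrite flippK.
by rewrite inE; apply/asboolP; split; [apply: flip_forest|apply: flip_avoids2].
Qed.

Lemma rev0 k : rev_ord (ord0 : 'I_k.+1) = ord_max.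
Proof. by apply: val_inj => /=; rewrite subn1. Qed.

Lemma revmax k : rev_ord (ord_max : 'I_k.+1) = ord0.
Proof. by apply: val_inj => /=; rewrite subnn. Qed.

Lemma flip_uncovered S : uncovered S -> uncovered (flipS S).
Proof.
move=> hu [[k [pi [Spi e]]] [l [sg [Ssg e2]]]]; apply: hu; split.
  by exists l, (cpl sg); split=> //; rewrite cplE e2 revmax.
by exists k, (cpl pi); split=> //; rewrite cplE e rev0.
Qed.

Lemma cpl12 : cpl pat12 = pat21.
Proof.
apply/permP => i; rewrite cplE /pat12 /pat21 perm1.
by case: i => [[|[|i]] hi] //; apply: val_inj; rewrite permE.
Qed.

Lemma cpl21 : cpl pat21 = pat12.
Proof. by rewrite -cpl12 cplK. Qed.


Section Push.
Variable n : nat.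
Implicit Types (par : parfun n) (u v w c : 'I_n).

Definition leafb par c := [forall v, par v != Some c].
Definition elig par := [set c | leafb par c && [exists v : 'I_n, (v < c)%N && (par v == par c)]].
Definition tgt par c := [arg min_(v < c | par v == par c) (v : nat)].
Definition push par (X : {set 'I_n}) : parfun n :=
  [ffun v => if v \in X then Some (tgt par v) else par v].
Definition unpush (G : parfun n) : parfun n :=
  [ffun v => if G v is Some u then (if (u < v)%N then G u else G v) else None].
Definition ascset (G : parfun n) := [set v | if G v is Some u then (u < v)%N else false].

Lemma tgtP par c : par (tgt par c) = par c /\ forall v, par v = par c -> (tgt par c <= v)%N.
Proof.
rewrite /tgt; case: arg_minnP => [//|m /eqP pm hmin]; split=> // v e.
by apply: hmin; rewrite e.
Qed.

Lemma elig_leaf par c v : c \in elig par -> par v != Some c.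
Proof. by rewrite inE => /andP [/forallP h _]. Qed.

Lemma tgt_lt par c : c \in elig par -> (tgt par c < c)%N.
Proof.
rewrite inE => /andP [_ /existsP [v /andP [lt /eqP e]]].
have [_ h] := tgtP par c; exact: leq_ltn_trans (h _ e) lt.
Qed.

Lemma tgt_notelig par c : tgt par c \notin elig par.
Proof.
apply/negP; rewrite inE => /andP [_ /existsP [v /andP [lt /eqP e]]].
have [e1 h] := tgtP par c.
by have := h v (etrans e e1); rewrite leqNgt lt.
Qed.

Variable F : parfun n.
Hypothesis hF : decr F.
Variable X : {set 'I_n}.
Hypothesis hX : X \subset elig F.

Let G := push F X.

Lemma X_elig c : c \in X -> c \in elig F.
Proof. by move=> h; apply: (fintype.subsetP hX). Qed.

Lemma tgt_notX c : tgt F c \notin X.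
Proof. by apply: contra (tgt_notelig F c); apply: X_elig. Qed.

Lemma pushE_in v : v \in X -> G v = Some (tgt F v).
Proof. by move=> h; rewrite /G /push ffunE h. Qed.

Lemma pushE_out v : v \notin X -> G v = F v.
Proof. by move=> h; rewrite /G /push ffunE (negbTE h). Qed.

Lemma push_leaf c v : c \in X -> G v != Some c.
Proof.
move=> hc; case: (boolP (v \in X)) => hv.
  rewrite pushE_in //; apply/eqP => -[e]; have := tgt_notX v; by rewrite e hc.
by rewrite pushE_out //; apply: elig_leaf; apply: X_elig.
Qed.

Lemma push_nonX u v : v \notin X -> strict_anc G u v -> u \notin X /\ strict_anc F u v.
Proof.
move=> hv ha.
have := (anc_rel (R := fun a b => a \notin X -> b \notin X /\ strict_anc F b a)) _ _ _ _ ha hv.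
apply.
  move=> a b e ha'; rewrite pushE_out // in e; split; last exact: anc_par.
  by apply/negP => hb; have := push_leaf a hb; rewrite pushE_out // e eqxx.
move=> a b c h1 h2 ha'; have [hb s1] := h1 ha'; have [hc s2] := h2 hb.
by split=> //; apply: anc_trans s2 s1.
Qed.

Lemma push_anc u x : strict_anc G u x -> (x < u)%N \/ (x \in X /\ u = tgt F x).
Proof.
move=> ha; case: (boolP (x \in X)) => hx; last first.
  by left; have [_ s] := push_nonX hx ha; apply: decr_anc hF s.
move/anc_unfold: ha; rewrite pushE_in // => -[[<-]|[y [[<-] hy]]]; first by right.
left; have [_ s] := push_nonX (tgt_notX x) hy.
apply: (decr_anc hF); apply/anc_unfold.
have [e _] := tgtP F x.
move/anc_unfold: s; rewrite e => -[h|h]; [by left|by right].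
Qed.

Lemma push_forest : is_forest G.
Proof.
move=> v /push_anc [|[hv e]]; first by rewrite ltnn.
by have := tgt_lt (X_elig hv); rewrite -e ltnn.
Qed.

Lemma push_noDesc c y : c \in X -> ~ strict_anc G c y.
Proof.
move=> hc ha.
have : c \notin X.
  apply: (anc_rel (R := fun a b => b \notin X)) ha => //.
  move=> a b e; apply/negP => hb; have := push_leaf a hb; by rewrite e eqxx.
by rewrite hc.
Qed.

Lemma push_chain k (w : 'I_k.+1 -> 'I_n) :
  (1 < k)%N ->
  (forall i j : 'I_k.+1, nat_of_ord j = (nat_of_ord i).+1 -> strict_anc G (w i) (w j)) ->
  forall i, i != ord0 -> (w i < w ord0)%N.
Proof.
move=> hk hc i ne.
have i0 : (0 < i)%N by rewrite lt0n; apply: contra ne => /eqP e; apply/eqP/val_inj.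
have := push_anc (chain_anc hc i0) => -[//|[hx e]]; exfalso.
case: (eqVneq (nat_of_ord i) 1%N) => i1.
  have h2 : (2 < k.+1)%N by [].
  apply: (push_noDesc (y := w (Ordinal h2)) hx).
  by apply: (hc i (Ordinal h2)); rewrite i1.
have hi' : (i.-1 < k.+1)%N by have := ltn_ord i; lia.
have := hc (Ordinal hi') i (esym (ltn_predK i0)).
move/anc_unfold; rewrite pushE_in // -e.
have i1' : nat_of_ord i <> 1%N by apply/eqP.
have s0 : strict_anc G (w ord0) (w (Ordinal hi')) by apply: (chain_anc hc) => /=; lia.
case=> [[e2]|[y [[<-] hy]]].
  by move: s0; rewrite -e2; apply: push_forest.
by apply: (push_forest (anc_trans s0 hy)).
Qed.

Lemma unpushK : unpush G = F.
Proof.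
apply/ffunP => v; rewrite ffunE; case: (boolP (v \in X)) => hv.
  rewrite pushE_in // (tgt_lt (X_elig hv)) pushE_out ?tgt_notX //.
  by have [e _] := tgtP F v.
rewrite pushE_out //; case E: (F v) => [u|] //.
by rewrite ltnNge ltnW ?(decrP hF E) //= pushE_out.
Qed.

Lemma ascsetK : ascset G = X.
Proof.
apply/setP => v; rewrite inE; case: (boolP (v \in X)) => hv.
  by rewrite pushE_in // tgt_lt //; apply: X_elig.
rewrite pushE_out //; case E: (F v) => [u|] //.
by rewrite ltnNge ltnW ?(decrP hF E).
Qed.

End Push.


Lemma push_avoids n (F : parfun n) (X : {set 'I_n}) S :
  decr F -> X \subset elig F -> nomax S -> ~ S 1%N pat12 -> avoids (push F X) S.
Proof.
move=> hF hX hS h12 k pi Spi [w [hc ho]].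
have := hS _ _ Spi; case: k pi Spi w hc ho => [|[|k]] pi Spi w hc ho.
- by apply/negP/negPn/eqP/val_inj => /=; have := ltn_ord (pi ord0); lia.
- move=> hn; apply: h12; suff -> : pat12 = pi by [].
  have p0 : nat_of_ord (pi ord0) = 0%N.
    have := ltn_ord (pi ord0); have : nat_of_ord (pi ord0) != 1%N.
      by apply: contra hn => /eqP e; apply/eqP/val_inj.
    move/eqP; lia.
  have p1 : nat_of_ord (pi ord_max) = 1%N.
    have := ltn_ord (pi ord_max); have : pi ord_max != pi ord0.
      by rewrite (inj_eq perm_inj).
    move=> ne; have : nat_of_ord (pi ord_max) <> nat_of_ord (pi ord0).
      by move=> e; move/eqP: ne; apply; apply: val_inj.
    rewrite p0; lia.
  apply/permP => i; rewrite /pat12 perm1; apply: val_inj.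
  case: i => [[|[|i]] hi] //=.
    by have -> : Ordinal hi = ord0 :> 'I_2 by apply: val_inj.
  by have -> : Ordinal hi = ord_max :> 'I_2 by apply: val_inj.
- rewrite (start_max (w := w)) ?eqxx //.
  by apply: (push_chain hF hX) hc.
Qed.

Lemma num_lower n S : nomax S -> ~ S 1%N pat12 ->
  (\sum_(F : parfun n | decr F) 2 ^ #|elig F| <= num_avoiding S n)%N.
Proof.
move=> hS h12.
pose D := [set FX : parfun n * {set 'I_n} | decr FX.1 && (FX.2 \subset elig FX.1)].
pose f := fun FX : parfun n * {set 'I_n} => push FX.1 FX.2.
have inj : {in D &, injective f}.
  move=> [F1 X1] [F2 X2]; rewrite /D !inE /f /= => /andP [d1 s1] /andP [d2 s2] e.
  have e1 := unpushK d1 s1; have e2 := unpushK d2 s2.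
  have a1 := ascsetK d1 s1; have a2 := ascsetK d2 s2.
  have : (unpush (push F1 X1), ascset (push F1 X1)) = (unpush (push F2 X2), ascset (push F2 X2)).
    by rewrite e.
  by rewrite e1 e2 a1 a2.
have -> : (\sum_(F : parfun n | decr F) 2 ^ #|elig F|)%N = #|D|.
  rewrite (eq_bigr (fun F => \sum_(X | X \in powerset (elig F)) 1)%N); last first.
    by move=> F _; rewrite sum1_card card_powerset.
  rewrite pair_big_dep /= sum1_card; apply: eq_card => FX.
  by rewrite /D [in RHS]inE unfold_in /= powersetE.
rewrite -(card_in_imset inj); apply: subset_leq_card; apply/fintype.subsetP => G.
case/finset.imsetP => -[F X]; rewrite /D inE /= => /andP [d s] ->; rewrite inE /f /=.
apply/asboolP; split; first exact: push_forest.
exact: push_avoids.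
Qed.


Definition aP n c := (\prod_(v < n) (n - v - (v < c)))%N.
Definition bP n c := (\prod_(v < n) (n - v - 2 * (v < c)))%N.

Lemma aP_rec n c : aP n.+1 c.+1 = (n * aP n c)%N.
Proof. by rewrite /aP big_ord_recl /= subn0 subn1. Qed.
Lemma bP_rec n c : bP n.+1 c.+1 = (n.-1 * bP n c)%N.
Proof. by rewrite /bP big_ord_recl /= subn0 muln1 subSS subn1. Qed.
Lemma aP0 n : aP n 0 = n`!.
Proof. rewrite -prod_nv; apply: eq_bigr => v _; by rewrite ltn0 subn0. Qed.
Lemma bP0 n : bP n 0 = n`!.
Proof. rewrite -prod_nv; apply: eq_bigr => v _; by rewrite ltn0 muln0 subn0. Qed.

Lemma aP_eq n c : (c <= n)%N -> (aP n c * n = n`! * (n - c))%N.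
Proof.
elim: n c => [|n IH] [|c] //= hc; rewrite ?aP0 //.
rewrite aP_rec factS subSS.
rewrite -[in RHS]mulnA -(IH c hc); ring.
Qed.

Lemma bP_eq n c : (c <= n)%N -> (bP n c * (n * n.-1) = n`! * ((n - c) * (n - c).-1))%N.
Proof.
elim: n c => [|n IH] [|c] //= hc; rewrite ?bP0 //.
rewrite bP_rec factS subSS -[in RHS]mulnA -(IH c hc) /=; ring.
Qed.

Lemma card_predD1' (T : finType) (A : pred T) x :
  #|[pred y | A y && (y != x)]| = (#|A| - (x \in A))%N.
Proof.
rewrite (cardD1 x A) addKn; apply: eq_card => y; rewrite !inE /=.
by rewrite andbC.
Qed.

Section Ec.
Variables (n : nat) (c : 'I_n).

Definition E1 := [set F : parfun n | decr F && leafb F c].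
Definition E2 := [set F : parfun n | (decr F && leafb F c) &&
   [forall v : 'I_n, (v < c)%N ==> (F v != F c)]].
Definition Ec := [set F : parfun n | decr F && (c \in elig F)].

Lemma E1_card : #|E1| = aP n c.
Proof.
have -> : E1 = [set F : parfun n | [forall v, [pred o | dopt v o && (o != Some c)] (F v)]].
  apply/setP => F; rewrite !inE; apply/andP/forallP.
    by case=> /forallP h1 /forallP h2 v; rewrite /= h1 h2.
  move=> h; split; apply/forallP => v; by have /andP [] := h v.
rewrite (card_fam (fun v => [pred o | dopt v o && (o != Some c)])) /aP; apply: eq_bigr => v _.
by rewrite card_predD1' card_dopt.
Qed.

Lemma card_part (T : finType) (A : {set T}) (f : T -> option 'I_n) :
  #|A| = (\sum_(p : option 'I_n) #|[set x in A | f x == p]|)%N.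
Proof.
rewrite -sum1_card (partition_big f xpredT) //=; apply: eq_bigr => p _.
by rewrite -sum1_card; apply: eq_bigl => x; rewrite !inE.
Qed.

Definition Gp (p : option 'I_n) (v : 'I_n) : pred (option 'I_n) := fun o =>
  if (v < c)%N then dopt v o && (o != Some c) && (o != p)
  else if v == c then o == p else dopt v o.

Lemma E2_card : (#|E2| <= bP n c)%N.
Proof.
rewrite (card_part E2 (fun F => F c)).
apply: leq_trans (_ : (\sum_(p : option 'I_n) (dopt c p) *
   \prod_(v < n) (if (v < c)%N then n - v - 2 else if v == c then 1 else n - v))%N <= _)%N.
  apply: leq_sum => p _; case: (boolP (dopt c p)) => hp; last first.
    rewrite mul0n leqn0 cards_eq0; apply/eqP/setP => F; rewrite !inE.
    apply/negP => /andP [/andP [/andP [/forallP hd _] _] /eqP e].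
    by have := hd c; rewrite e (negbTE hp).
  rewrite mul1n.
  apply: leq_trans (_ : #|[set F : parfun n | [forall v, Gp p v (F v)]]| <= _)%N.
    apply: subset_leq_card; apply/fintype.subsetP => F; rewrite !inE.
    case/andP => /andP [/andP [/forallP hd /forallP hl] /forallP hs] /eqP e.
    apply/forallP => v; rewrite /Gp; case: ifP => hv.
      by rewrite /= hd hl -e (implyP (hs v) hv).
    by case: eqP => [->|_]; rewrite /= ?e ?eqxx ?hd.
  rewrite (card_fam (Gp p)); apply: eq_leq; apply: eq_bigr => v _.
  case: ifP => hv.
    have -> : #|Gp p v| = #|[pred o | [pred o | dopt v o && (o != Some c)] o && (o != p)]|.
      by apply: eq_card => o; rewrite !unfold_in /Gp hv.
    rewrite card_predD1' card_predD1' card_dopt.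
    have -> : (Some c \in dopt v) by rewrite unfold_in.
    have -> : p \in [pred o | dopt v o && (o != Some c)].
      rewrite unfold_in /=; case: p hp => [u|] //= hu.
      apply/andP; split; first by apply: ltn_trans hv hu.
      by apply/eqP => -[e]; rewrite e ltnn in hu.
    lia.
  case: eqP => ec.
    by rewrite -(card1 p); apply: eq_card => o; rewrite !unfold_in /Gp hv ec eqxx.
  by rewrite -card_dopt; apply: eq_card => o; rewrite !unfold_in /Gp hv; move/eqP/negbTE: ec => ->.
rewrite -big_distrl /=.
have -> : (\sum_(p : option 'I_n) dopt c p)%N = #|dopt c|.
  rewrite -sum1_card [RHS]big_mkcond /=; apply: eq_bigr => p _; rewrite [p \in _]unfold_in; by case: p => [u|] //=; case: (c < u)%N.
rewrite card_dopt /bP; apply: eq_leq; rewrite [in RHS](bigD1 c) //= [in LHS](bigD1 c) //= ltnn eqxx mul1n muln0 subn0.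
congr (_ * _)%N; apply: eq_bigr => v hv.
by case: ifP => h; rewrite ?muln1 ?muln0 ?subn0 // (negbTE hv).
Qed.

Lemma Ec_ge : (#|E1| - #|E2| <= #|Ec|)%N.
Proof.
apply: leq_trans (_ : #|E1 :\: E2| <= _)%N.
  by rewrite cardsD leq_sub2l // subset_leq_card // subsetIr.
apply: subset_leq_card; apply/fintype.subsetP => F; rewrite !inE.
case/andP => hn /andP [hd hl]; rewrite hd hl /= in hn *.
move/forallPn: hn => [v]; rewrite negb_imply negbK => /andP [lt e].
by apply/existsP; exists v; rewrite lt.
Qed.

Lemma Ec_bound : (n`! * (c * (n - c)) <= #|Ec| * (n * n.-1))%N.
Proof.
have hc := ltn_ord c.
have h1 := aP_eq (ltnW hc); have h2 := bP_eq (ltnW hc).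
apply: leq_trans (_ : (aP n c - bP n c) * (n * n.-1) <= _)%N; last first.
  rewrite leq_mul2r; apply/orP; right.
  apply: leq_trans Ec_ge; rewrite E1_card; apply: leq_sub2l; exact: E2_card.
rewrite mulnBl h2 [(aP n c * _)%N]mulnA h1 [(n`! * ((n - c) * _))%N]mulnA -mulnBr.
have -> : (n.-1 - (n - c).-1 = c)%N by lia.
by apply: eq_leq; ring.
Qed.

End Ec.

Lemma sum_elig n : (\sum_(F : parfun n | decr F) #|elig F| = \sum_(c : 'I_n) #|Ec c|)%N.
Proof.
rewrite (eq_bigr (fun F => \sum_(c : 'I_n) (c \in elig F : nat))); last first.
  by move=> F _; rewrite -sum1_card big_mkcond /=.
rewrite exchange_big /=; apply: eq_bigr => c _.
rewrite -sum1_card big_mkcond /= [RHS]big_mkcond /=; apply: eq_bigr => F _.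
by rewrite /Ec [F \in _]inE; case: (decr F) => //=; case: (c \in elig F).
Qed.

Lemma tri n : (6 * \sum_(c < n) c * (n - c) = n.-1 * n * n.+1)%N.
Proof.
rewrite -(big_mkord xpredT (fun c => c * (n - c))%N).
have g : forall m, (2 * \sum_(0 <= c < m) c = m * m.-1)%N.
  elim=> [|m IH]; first by rewrite big_geq.
  rewrite big_nat_recr //= mulnDr IH; case: m {IH} => //= m; ring.
elim: n => [|n IH]; first by rewrite big_geq.
rewrite big_nat_recr //= subSnn muln1.
rewrite (eq_big_nat _ _ (F2 := fun c => (c * (n - c) + c)%N)); last first.
  by move=> i /andP [_ hi]; rewrite subSn ?mulnS 1?addnC //; apply: ltnW.
rewrite big_split /= !mulnDr IH.
have e' : (6 * \sum_(0 <= i < n) i = 3 * (n * n.-1))%N by rewrite -(g n); ring.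
rewrite e'; case: n {IH e' g} => //= n; ring.
Qed.

Lemma elig_total n : (n`! * (n.-1 * n * n.+1) <= 6 * (\sum_(F : parfun n | decr F) #|elig F|) * (n * n.-1))%N.
Proof.
rewrite sum_elig -tri.
apply: (@leq_trans (6 * \sum_(c < n) (#|Ec c| * (n * n.-1)))%N).
  rewrite mulnCA leq_mul2l /= big_distrr /=; apply: leq_sum => c _; exact: Ec_bound.
by rewrite -mulnA big_distrl.
Qed.



Section RealPart.
Local Open Scope classical_set_scope.
Local Open Scope ring_scope.

Section Real.
Variable R : realType.

Lemma ln_nat_pos (n : nat) : (0 < n)%N -> (0 : R) < n%:R.
Proof. by move=> h; rewrite ltr0n. Qed.

Lemma lnS_le (n : nat) : (0 < n)%N ->
  ln (n.+1%:R : R) - ln (n%:R) <= (n%:R)^-1.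
Proof.
move=> h; have hn : (0 : R) < n%:R by rewrite ltr0n.
rewrite -ln_div ?posrE ?ltr0n //.
have -> : (n.+1%:R / n%:R : R) = 1 + n%:R^-1.
  by rewrite -natr1 mulrDl divff ?gt_eqF // mul1r addrC.
apply: le_ln1Dx; apply: lt_le_trans (_ : 0 <= _); first by rewrite ltrN10.
by rewrite invr_ge0 ltW.
Qed.

Lemma lnS_ge (n : nat) : (0 < n)%N ->
  (n.+1%:R)^-1 <= ln (n.+1%:R : R) - ln (n%:R).
Proof.
move=> h; have hn : (0 : R) < n%:R by rewrite ltr0n.
have hn1 : (0 : R) < n.+1%:R by rewrite ltr0n.
rewrite -opprB -ln_div ?posrE ?ltr0n // lerNr.
have -> : (n%:R / n.+1%:R : R) = 1 + (- (n.+1%:R)^-1).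
  by field; rewrite addrC natr1 pnatr_eq0.
apply: le_ln1Dx; rewrite ltrN2 invf_lt1 //.
by rewrite ltr1n ltnS.
Qed.

Lemma lnfact_lb (n : nat) : (0 < n)%N -> n%:R * ln (n%:R : R) - n%:R <= ln (n`!%:R).
Proof.
elim: n => [//|n IH] _; case: n IH => [|n] IH.
  by have -> : 1`! = 1%N by []; rewrite ln1 mulr0 sub0r lerN10.
have h := IH isT; have hd := @lnS_le n.+1 isT.
rewrite factS natrM lnM ?posrE ?ltr0n ?fact_gt0 //.
have hp : (0 : R) < n.+1%:R by rewrite ltr0n.
have e : n.+1%:R * (n.+1%:R)^-1 = (1 : R) by rewrite divff // gt_eqF.
set a := ln (n.+2%:R : R) in hd *; set b := ln (n.+1%:R : R) in h hd *.
rewrite -[(n.+2%:R : R)]natr1.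
have : n.+1%:R * (a - b) <= n.+1%:R * (n.+1%:R)^-1 by rewrite ler_pM2l.
rewrite e => h2; lra.
Qed.

Lemma lnfact_ub (n : nat) : (0 < n)%N ->
  ln (n`!%:R : R) <= (n.+1%:R) * ln (n%:R : R) - n%:R + 1.
Proof.
elim: n => [//|n IH] _; case: n IH => [|n] IH.
  by have -> : 1`! = 1%N by []; rewrite ln1 mulr0 sub0r addrC subrr.
have h := IH isT; have hd := @lnS_ge n.+1 isT.
rewrite factS natrM lnM ?posrE ?ltr0n ?fact_gt0 //.
have hp : (0 : R) < n.+2%:R by rewrite ltr0n.
have e : n.+2%:R * (n.+2%:R)^-1 = (1 : R) by rewrite divff // gt_eqF.
set a := ln (n.+2%:R : R) in hd *; set b := ln (n.+1%:R : R) in h hd *.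
have : n.+2%:R * (n.+2%:R)^-1 <= n.+2%:R * (a - b) by rewrite ler_pM2l.
rewrite e => h2.
rewrite -[(n.+3%:R : R)]natr1 -[(n.+2%:R : R)]natr1 in h2 *; rewrite -[(n.+2%:R : R)]natr1 in h; lra.
Qed.


Lemma jensen (I : finType) (P : pred I) (x : I -> R) (a : R) : (0 < #|P|)%N ->
  #|P|%:R * expR (a * ((\sum_(i | P i) x i) / #|P|%:R)) <= \sum_(i | P i) expR (a * x i).
Proof.
move=> hP.
set K : R := #|P|%:R; set mu := (\sum_(i | P i) x i) / K.
have hK : 0 < K by rewrite ltr0n.
have step : forall i, P i -> expR (a * mu) * (1 + a * (x i - mu)) <= expR (a * x i).
  move=> i _; have -> : a * x i = a * mu + a * (x i - mu) by ring.
  by rewrite expRD ler_pM2l ?expR_gt0 // expR_ge1Dx.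
apply: le_trans (ler_sum _ step).
rewrite -big_distrr /= big_split /= -big_distrr /= sumrB.
have e1 : \sum_(i | P i) (1 : R) = K by rewrite sumr_const.
have e2 : \sum_(i | P i) mu = K * mu by rewrite sumr_const mulr_natl.
rewrite e1 e2.
have -> : K * mu = \sum_(i | P i) x i.
  by rewrite /mu mulrC -mulrA mulVf ?mulr1 // gt_eqF.
by rewrite subrr mulr0 addr0 mulrC.
Qed.

Lemma u_form (N n : nat) : (0 < n)%N -> (0 < N)%N ->
  (N%:R `^ (n%:R^-1) : R) / n%:R = expR (ln N%:R / n%:R - ln n%:R).
Proof.
move=> hn hN; rewrite /powR; have -> : (N%:R == 0 :> R) = false by rewrite pnatr_eq0; case: (N) hN.
rewrite expRD expRN lnK ?posrE ?ltr0n //.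
by rewrite [n%:R^-1 * _]mulrC.
Qed.

Lemma lnn_small (eps : R) (n : nat) : 0 < eps -> (0 < n)%N -> 8 / (eps ^+ 2) < n%:R ->
  ln (n%:R : R) < eps * n%:R / 2.
Proof.
move=> he hn hb.
have hn' : (0 : R) < n%:R by rewrite ltr0n.
have l0 : 0 <= ln (n%:R : R) by apply: ln_ge0; rewrite ler1n.
have hsq : 1 + ln (n%:R : R) ^+ 2 / 2 <= n%:R.
  have := expR_ge1Dxn 1 l0; rewrite lnK ?posrE //.
have he2 : 0 < eps ^+ 2 by rewrite exprn_gt0.
rewrite ltr_pdivrMr ?exprn_gt0 // in hb.
rewrite ltNge; apply/negP => hc.
set l := ln (n%:R : R) in l0 hsq hc.
have h1 : (eps * n%:R / 2) ^+ 2 <= l ^+ 2.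
  rewrite ler_sqr ?nnegrE //; apply: divr_ge0 => //; apply: mulr_ge0; exact: ltW.
have : (eps * n%:R / 2) ^+ 2 <= 2 * n%:R by lra.
rewrite expr_div_n exprMn ler_pdivrMr // => h2.
have : eps ^+ 2 * n%:R <= 8.
  rewrite -(ler_pM2r hn').
  have -> : 8 * n%:R = 2 * n%:R * 2 ^+ 2 :> R by ring.
  by move: h2; rewrite expr2 mulrA.
lra.
Qed.

Lemma w_bounds (n : nat) : (0 < n)%N ->
  -1 <= ln (n`!%:R : R) / n%:R - ln n%:R <= -1 + (ln (n%:R : R) + 1) / n%:R.
Proof.
move=> hn; have hn' : (0 : R) < n%:R by rewrite ltr0n.
have lb := @lnfact_lb n hn; have ub := @lnfact_ub n hn.
set L := ln (n`!%:R : R) in lb ub *; set l := ln (n%:R : R) in lb ub *.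
apply/andP; split.
  rewrite lerBrDr ler_pdivlMr //; lra.
have hi : 0 <= n%:R^-1 :> R by rewrite invr_ge0 ltW.
have h := ler_wpM2r hi ub.
have e : ((n.+1%:R) * l - n%:R + 1) * n%:R^-1 = l + (l + 1) / n%:R - 1.
  by rewrite -natr1; field; rewrite gt_eqF.
rewrite e in h; lra.
Qed.


Lemma w_lim : (fun n : nat => ln (n`!%:R : R) / n%:R - ln n%:R) @ \oo --> (-1 : R).
Proof.
apply/cvgrPdist_lt => eps he.
near=> n.
have hn : (0 < n)%N by near: n; exact: nbhs_infty_gt.
have hn' : (0 : R) < n%:R by rewrite ltr0n.
have /andP [b1 b2] := @w_bounds n hn.
have h1 : ln (n%:R : R) < eps * n%:R / 2.
  apply: (@lnn_small eps n) => //; near: n; exact: nbhs_infty_gtr.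
have h2 : 2 / eps < n%:R by near: n; exact: nbhs_infty_gtr.
rewrite ltr_pdivrMr // in h2.
rewrite ler0_norm; last by lra.
have h3 : (ln (n%:R : R) + 1) / n%:R < eps.
  rewrite ltr_pdivrMr //.
  have : eps * n%:R / 2 * 2 = eps * n%:R by rewrite -mulrA mulVf ?mulr1.
  lra.
lra.
Unshelve. all: by end_near.
Qed.

Lemma fact_lim : (fun n : nat => (n`!%:R `^ (n%:R^-1) : R) / n%:R) @ \oo --> expR (-1).
Proof.
have hc : expR x @[x --> (-1 : R)] --> expR (-1 : R) by apply: continuous_expR.
have := cvg_comp _ _ w_lim hc.
apply: cvg_trans; apply: near_eq_cvg; near=> n.
have hn : (0 < n)%N by near: n; exact: nbhs_infty_gt.
by rewrite /= u_form ?fact_gt0.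
Unshelve. all: by end_near.
Qed.


Lemma no_lim (f : nat -> nat) :
  (forall n, (2 <= n)%N -> n`!%:R * expR (ln 2 * n%:R / 6) <= (f n)%:R :> R) ->
  ~ ((fun n : nat => ((f n)%:R `^ (n%:R^-1) : R) / n%:R) @ \oo --> expR (-1)).
Proof.
move=> hf hl.
set c := expR (-1 + ln (2 : R) / 6).
have l2 : 0 < ln (2 : R) by apply: ln_gt0; rewrite ltr1n.
have hc : expR (-1) < c by rewrite /c ltr_expR ltrDl divr_gt0.
have key : forall n, (2 <= n)%N -> c <= ((f n)%:R `^ (n%:R^-1) : R) / n%:R.
  move=> n hn2; have hn : (0 < n)%N by apply: leq_trans hn2.
  have hn' : (0 : R) < n%:R by rewrite ltr0n.
  have hF := hf n hn2.
  have hpos : (0 : R) < n`!%:R * expR (ln 2 * n%:R / 6) by rewrite mulr_gt0 ?expR_gt0 ?ltr0n ?fact_gt0.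
  have fpos : (0 < f n)%N by rewrite -(ltr0n R); apply: lt_le_trans hF.
  rewrite u_form // /c ler_expR.
  have := hF; rewrite -ler_ln ?posrE ?ltr0n // lnM ?posrE ?ltr0n ?fact_gt0 ?expR_gt0 // expRK.
  have lb := @lnfact_lb n hn.
  set L := ln ((f n)%:R : R); set l := ln (n%:R : R) in lb *; set Lf := ln (n`!%:R : R) in lb *.
  move=> h; have h' : n%:R * l - n%:R + ln 2 * n%:R / 6 <= L by lra.
  have hi : 0 <= n%:R^-1 :> R by rewrite invr_ge0 ltW.
  have := ler_wpM2r hi h'.
  have -> : (n%:R * l - n%:R + ln 2 * n%:R / 6) * n%:R^-1 = l - 1 + ln 2 / 6.
    by field; rewrite gt_eqF.
  lra.
move/cvgrPdist_lt : hl => /(_ (c - expR (-1))); rewrite subr_gt0 => /(_ hc) h.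
have [n [hn2 hn]] : exists n, (2 <= n)%N /\
    `|expR (-1) - ((f n)%:R `^ (n%:R^-1) : R) / n%:R| < c - expR (-1).
  apply: (@filter_ex _ (\oo : set_system nat)); near=> n; split.
    by near: n; exact: nbhs_infty_ge.
  by near: n; exact: h.
have := key n hn2; rewrite ler0_norm in hn.
  lra.
have := key n hn2; lra.
Unshelve. all: by end_near.
Qed.


End Real.

End RealPart.

Local Open Scope classical_set_scope.
Local Open Scope ring_scope.

Lemma lower_real (R : realType) S n : nomax S -> ~ S 1%N pat12 -> (2 <= n)%N ->
  n`!%:R * expR (ln 2 * n%:R / 6) <= (num_avoiding S n)%:R :> R.
Proof.
move=> hS h12 hn2.
have hn : (0 < n)%N by apply: leq_trans hn2.
have hK : #|[pred F : parfun n | decr F]| = n`!.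
  by rewrite -card_decr; apply: eq_card => F; rewrite !inE.
have hnat := @num_lower n S hS h12.
apply: le_trans (_ : (\sum_(F : parfun n | decr F) 2 ^ #|elig F|)%N%:R <= _); last by rewrite ler_nat.
rewrite natr_sum.
have e2 : forall k : nat, ((2 ^ k)%N%:R : R) = expR (ln 2 * k%:R).
  move=> k; rewrite natrX -powR_mulrn ?ler0n // /powR.
  by rewrite pnatr_eq0 /= mulrC.
rewrite (eq_bigr (fun F => expR (ln 2 * (#|elig F|)%:R))); last by move=> F _; rewrite e2.
have hJ := @jensen R _ [pred F : parfun n | decr F] (fun F => (#|elig F|)%:R) (ln 2).
rewrite hK fact_gt0 in hJ; have {}hJ := hJ isT.
apply: le_trans hJ; rewrite ler_pM2l ?ltr0n ?fact_gt0 // ler_expR.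
have l2 : 0 < ln (2 : R) by apply: ln_gt0; rewrite ltr1n.
rewrite -mulrA ler_pM2l //.
have ht := elig_total n.
set E := (\sum_(F : parfun n | decr F) #|elig F|)%N in ht.
have -> : \sum_(i | [pred F : parfun n | decr F] i) (#|elig i|)%:R = E%:R :> R.
  by rewrite natr_sum.
have hf : (0 : R) < n`!%:R by rewrite ltr0n fact_gt0.
rewrite ler_pdivlMr //.
have hm : (0 < n * n.-1)%N by rewrite muln_gt0 hn; case: (n) hn2 => [|[|m]].
have : (n`! * n.+1 <= 6 * E)%N.
  rewrite -(leq_pmul2r hm); apply: leq_trans ht; apply: eq_leq.
  case: (n) hn2 => [|[|m]] //= _; ring.
rewrite -(ler_nat R) natrM natrM -natr1 => h.
lra.
Qed.

Lemma nomax_cases S : uncovered S -> nomax S \/ nomax (flipS S).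
Proof.
move=> hu.
case: (pselect (exists k (pi : 'S_k.+1), S k pi /\ pi ord0 = ord_max)) => [hB|hnB].
  right => k pi Spi; apply/negP => /eqP e; apply: hu; split => //.
  by exists k, (cpl pi); split => //; rewrite cplE e revmax.
left => k pi Spi; apply/negP => /eqP e; apply: hnB.
by exists k, pi.
Qed.

Theorem proposition5p11 (R : realType) (S : patset) :
  uncovered S ->
  ((fun n : nat => ((num_avoiding S n)%:R `^ (n%:R^-1) : R) / n%:R)
      @ \oo --> expR (-1 : R)
   <-> (S 1%N pat12 \/ S 1%N pat21)).
Proof.
move=> hu; split.
  move=> hl.
  case: (boolP (S 1%N pat12)) => [h|h12]; first by left.
  case: (boolP (S 1%N pat21)) => [h|h21]; first by right.
  exfalso; case: (nomax_cases hu) => hm.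
    apply: (@no_lim R (num_avoiding S)) hl => n hn.
    by apply: lower_real => // h; rewrite h in h12.
  have e : (fun n : nat => ((num_avoiding S n)%:R `^ (n%:R^-1) : R) / n%:R) =
           (fun n : nat => ((num_avoiding (flipS S) n)%:R `^ (n%:R^-1) : R) / n%:R).
    by apply: funext => n; rewrite num_flip.
  rewrite e in hl.
  apply: (@no_lim R (num_avoiding (flipS S))) hl => n hn.
  apply: lower_real => //; rewrite /flipS cpl12 => h; by rewrite h in h21.
case=> [h12|h21].
  have -> : (fun n : nat => ((num_avoiding S n)%:R `^ (n%:R^-1) : R) / n%:R) =
           (fun n : nat => (n`!%:R `^ (n%:R^-1) : R) / n%:R).
    by apply: funext => n; rewrite case12.
  exact: fact_lim.
have -> : (fun n : nat => ((num_avoiding S n)%:R `^ (n%:R^-1) : R) / n%:R) =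
         (fun n : nat => (n`!%:R `^ (n%:R^-1) : R) / n%:R).
  apply: funext => n; rewrite -num_flip case12 //; first exact: flip_uncovered.
  by rewrite /flipS cpl12.
exact: fact_lim.
Qed.
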